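(* $\pi_{C_5}(K_3)\le \frac{24}{625}$. Equivalently, $$\lim_{n\to\infty}\frac{\mathrm{ex}_{C_5}(n,\{K_3\})}{\binom{n}{5}}\le \frac{24}{625}.$$
   Context: All graphs are simple. For a graph $G$ on $n$ vertices and a graph $A$ on $k$ vertices, let $C_A(G)$ be the set of $k$-element subsets of $V(G)$ that induce a copy of $A$ in $G$. The $A$-density of $G$ is $d_A(G)=|C_A(G)|/\binom{n}{k}$. For a family $\mathcal{F}$ of forbidden graphs, set $$\mathrm{ex}_A(n,\mathcal{F})=\max\{|C_A(G)| : G \text{ is } \mathcal{F}\text{-free},\ |V(G)|=n\},$$ where $\mathcal{F}$-free means containing no member of $\mathcal{F}$ as a subgraph. The Turán density is $\pi_A(\mathcal{F})=\lim_{n\to\infty}\mathrm{ex}_A(n,\mathcal{F})/\binom{n}{k}$; this limit exists. Here $A=C_5$ is the 5-cycle and $\mathcal{F}=\{K_3\}$. So $\pi_{C_5}(K_3)$ is the limit, as $n\to\infty$, of the maximum over triangle-free $n$-vertex graphs $G$ of the number of 5-vertex subsets inducing a $5$-cycle, divided by $\binom{n}{5}$. *)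

(* Defs.v *)
From mathcomp Require Import all_boot all_order all_algebra.
Set Implicit Arguments. Unset Strict Implicit. Unset Printing Implicit Defensive.

Definition graph (n : nat) := {ffun 'I_n -> {ffun 'I_n -> bool}}.

Definition simple_graph n (g : graph n) : bool :=
  [forall x, ~~ g x x] && [forall x, forall y, g x y == g y x].

Definition triangle_free n (g : graph n) : bool :=
  [forall x, forall y, forall z, ~~ [&& g x y, g y z & g x z]].

Definition c5adj (i j : 'I_5) : bool :=
  (val j == (val i).+1 %% 5) || (val i == (val j).+1 %% 5).

Definition induces_C5 n (g : graph n) (S : {set 'I_n}) : bool :=
  [exists f : {ffun 'I_5 -> 'I_n},
     [&& injectiveb f, f @: setT == S &
         [forall i, forall j, g (f i) (f j) == c5adj i j]]].

Definition C_C5 n (g : graph n) : {set {set 'I_n}} :=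
  [set S : {set 'I_n} | (#|S| == 5) && induces_C5 g S].

Definition ex_C5_K3 (n : nat) : nat :=
  \max_(g : graph n | simple_graph g && triangle_free g) #|C_C5 g|.

(* Main.v *)
Require Import Defs.
From mathcomp Require Import all_boot all_order all_algebra.
From mathcomp Require Import zify ssrZ lra.
From Stdlib Require Import ZArith FunctionalExtensionality.
Import Order.TTheory GRing.Theory Num.Theory.

Module M1.

Definition o0 : 'I_5 := @Ordinal 5 0 isT.
Definition o1 : 'I_5 := @Ordinal 5 1 isT.
Definition o2 : 'I_5 := @Ordinal 5 2 isT.
Definition o3 : 'I_5 := @Ordinal 5 3 isT.
Definition o4 : 'I_5 := @Ordinal 5 4 isT.
Definition cN : Z := 27930142878608371532532784125711390402358316400000%Z.
Definition cA : Z := 1072517486538561466849258910427317391450559349760%Z.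
Definition cB : Z := 335161714543300458390393409508536684828299796800000%Z.
Definition sqs : seq (Z * seq Z) := [::
  (4337820676157386376630989574950322718285120%Z, [:: (-318)%Z; 0%Z; 0%Z; 0%Z; 0%Z; 0%Z; 0%Z; 0%Z; 609%Z; 0%Z; 0%Z; 0%Z; 0%Z; 0%Z; 0%Z; 0%Z; 609%Z; 0%Z; 0%Z; 0%Z; 0%Z; 0%Z; 0%Z; 0%Z; (-1558)%Z; 0%Z; 0%Z; 0%Z; 0%Z; 0%Z; 0%Z; 0%Z; 1717%Z; 0%Z; 0%Z; 0%Z; 0%Z; 0%Z; 0%Z; 0%Z; (-450)%Z; 0%Z; 0%Z; 0%Z; 0%Z; 0%Z; 0%Z; 0%Z; (-450)%Z; 0%Z; 0%Z; 0%Z; 0%Z; 0%Z; 0%Z; 0%Z; 477%Z; 0%Z; 0%Z; 0%Z; 0%Z; 0%Z; 0%Z; 0%Z]);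
  (310933489606262678455890460222832172000%Z, [:: 26326%Z; 0%Z; 0%Z; 0%Z; 0%Z; 0%Z; 0%Z; 0%Z; (-38171)%Z; 0%Z; 0%Z; 0%Z; 0%Z; 0%Z; 0%Z; 0%Z; (-187550)%Z; 0%Z; 0%Z; 0%Z; 0%Z; 0%Z; 0%Z; 0%Z; (-13163)%Z; 0%Z; 0%Z; 0%Z; 0%Z; 0%Z; 0%Z; 0%Z; 0%Z; 0%Z; 0%Z; 0%Z; 0%Z; 0%Z; 0%Z; 0%Z; 174387%Z; 0%Z; 0%Z; 0%Z; 0%Z; 0%Z; 0%Z; 0%Z; 25008%Z; 0%Z; 0%Z; 0%Z; 0%Z; 0%Z; 0%Z; 0%Z; (-39489)%Z; 0%Z; 0%Z; 0%Z; 0%Z; 0%Z; 0%Z; 0%Z]);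
  (232939310132620740966736683756495634400%Z, [:: 26326%Z; 0%Z; 0%Z; 0%Z; 0%Z; 0%Z; 0%Z; 0%Z; (-212558)%Z; 0%Z; 0%Z; 0%Z; 0%Z; 0%Z; 0%Z; 0%Z; (-13163)%Z; 0%Z; 0%Z; 0%Z; 0%Z; 0%Z; 0%Z; 0%Z; (-13163)%Z; 0%Z; 0%Z; 0%Z; 0%Z; 0%Z; 0%Z; 0%Z; 0%Z; 0%Z; 0%Z; 0%Z; 0%Z; 0%Z; 0%Z; 0%Z; 0%Z; 0%Z; 0%Z; 0%Z; 0%Z; 0%Z; 0%Z; 0%Z; 199395%Z; 0%Z; 0%Z; 0%Z; 0%Z; 0%Z; 0%Z; 0%Z; (-39489)%Z; 0%Z; 0%Z; 0%Z; 0%Z; 0%Z; 0%Z; 0%Z]);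
  (64231040883124533517198959213231061936062277120%Z, [:: (-2)%Z; 0%Z; 0%Z; 0%Z; 0%Z; 0%Z; 0%Z; 0%Z; 1%Z; 0%Z; 0%Z; 0%Z; 0%Z; 0%Z; 0%Z; 0%Z; 1%Z; 0%Z; 0%Z; 0%Z; 0%Z; 0%Z; 0%Z; 0%Z; 1%Z; 0%Z; 0%Z; 0%Z; 0%Z; 0%Z; 0%Z; 0%Z; 0%Z; 0%Z; 0%Z; 0%Z; 0%Z; 0%Z; 0%Z; 0%Z; 0%Z; 0%Z; 0%Z; 0%Z; 0%Z; 0%Z; 0%Z; 0%Z; 0%Z; 0%Z; 0%Z; 0%Z; 0%Z; 0%Z; 0%Z; 0%Z; 3%Z; 0%Z; 0%Z; 0%Z; 0%Z; 0%Z; 0%Z; 0%Z]);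
  (575582542578225070222210904187766932557616%Z, [:: 0%Z; (-4752)%Z; 0%Z; 0%Z; 0%Z; 0%Z; 0%Z; 0%Z; 0%Z; 6470%Z; 0%Z; 0%Z; 0%Z; 0%Z; 0%Z; 0%Z; 0%Z; 2282%Z; 0%Z; 0%Z; 0%Z; 0%Z; 0%Z; 0%Z; 0%Z; 0%Z; 0%Z; 0%Z; 0%Z; 0%Z; 0%Z; 0%Z; 0%Z; 1950%Z; 0%Z; 0%Z; 0%Z; 0%Z; 0%Z; 0%Z; 0%Z; (-2125)%Z; 0%Z; 0%Z; 0%Z; 0%Z; 0%Z; 0%Z; 0%Z; (-1875)%Z; 0%Z; 0%Z; 0%Z; 0%Z; 0%Z; 0%Z; 0%Z; 0%Z; 0%Z; 0%Z; 0%Z; 0%Z; 0%Z; 0%Z]);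
  (252144527782287479423252672901884256%Z, [:: 0%Z; (-4862119)%Z; 0%Z; 0%Z; 0%Z; 0%Z; 0%Z; 0%Z; 0%Z; 0%Z; 0%Z; 0%Z; 0%Z; 0%Z; 0%Z; 0%Z; 0%Z; 9130994%Z; 0%Z; 0%Z; 0%Z; 0%Z; 0%Z; 0%Z; 0%Z; 0%Z; 0%Z; 0%Z; 0%Z; 0%Z; 0%Z; 0%Z; 0%Z; 2041650%Z; 0%Z; 0%Z; 0%Z; 0%Z; 0%Z; 0%Z; 0%Z; (-1820500)%Z; 0%Z; 0%Z; 0%Z; 0%Z; 0%Z; 0%Z; 0%Z; (-2448375)%Z; 0%Z; 0%Z; 0%Z; 0%Z; 0%Z; 0%Z; 0%Z; 0%Z; 0%Z; 0%Z; 0%Z; 0%Z; 0%Z; 0%Z]);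
  (104358861333452390701909848368400%Z, [:: 0%Z; (-218880478)%Z; 0%Z; 0%Z; 0%Z; 0%Z; 0%Z; 0%Z; 0%Z; 0%Z; 0%Z; 0%Z; 0%Z; 0%Z; 0%Z; 0%Z; 0%Z; 0%Z; 0%Z; 0%Z; 0%Z; 0%Z; 0%Z; 0%Z; 0%Z; 0%Z; 0%Z; 0%Z; 0%Z; 0%Z; 0%Z; 0%Z; 0%Z; 586213430%Z; 0%Z; 0%Z; 0%Z; 0%Z; 0%Z; 0%Z; 0%Z; 109091839%Z; 0%Z; 0%Z; 0%Z; 0%Z; 0%Z; 0%Z; 0%Z; 109788639%Z; 0%Z; 0%Z; 0%Z; 0%Z; 0%Z; 0%Z; 0%Z; 0%Z; 0%Z; 0%Z; 0%Z; 0%Z; 0%Z; 0%Z]);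
  (394955839000715367415861989%Z, [:: 0%Z; (-2323664003)%Z; 0%Z; 0%Z; 0%Z; 0%Z; 0%Z; 0%Z; 0%Z; 0%Z; 0%Z; 0%Z; 0%Z; 0%Z; 0%Z; 0%Z; 0%Z; 0%Z; 0%Z; 0%Z; 0%Z; 0%Z; 0%Z; 0%Z; 0%Z; 0%Z; 0%Z; 0%Z; 0%Z; 0%Z; 0%Z; 0%Z; 0%Z; 0%Z; 0%Z; 0%Z; 0%Z; 0%Z; 0%Z; 0%Z; 0%Z; 482535029280%Z; 0%Z; 0%Z; 0%Z; 0%Z; 0%Z; 0%Z; 0%Z; (-480211365277)%Z; 0%Z; 0%Z; 0%Z; 0%Z; 0%Z; 0%Z; 0%Z; 0%Z; 0%Z; 0%Z; 0%Z; 0%Z; 0%Z; 0%Z]);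
  (767393530191653986864862747411867196119620193619%Z, [:: 0%Z; (-1)%Z; 0%Z; 0%Z; 0%Z; 0%Z; 0%Z; 0%Z; 0%Z; 0%Z; 0%Z; 0%Z; 0%Z; 0%Z; 0%Z; 0%Z; 0%Z; 0%Z; 0%Z; 0%Z; 0%Z; 0%Z; 0%Z; 0%Z; 0%Z; 0%Z; 0%Z; 0%Z; 0%Z; 0%Z; 0%Z; 0%Z; 0%Z; 0%Z; 0%Z; 0%Z; 0%Z; 0%Z; 0%Z; 0%Z; 0%Z; 0%Z; 0%Z; 0%Z; 0%Z; 0%Z; 0%Z; 0%Z; 0%Z; 1%Z; 0%Z; 0%Z; 0%Z; 0%Z; 0%Z; 0%Z; 0%Z; 0%Z; 0%Z; 0%Z; 0%Z; 0%Z; 0%Z; 0%Z]);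
  (1301346202847215912989296872485096815485536%Z, [:: 0%Z; 0%Z; 0%Z; 2304%Z; 0%Z; 0%Z; 0%Z; 0%Z; 0%Z; 0%Z; 0%Z; (-783)%Z; 0%Z; 0%Z; 0%Z; 0%Z; 0%Z; 0%Z; 0%Z; 8585%Z; 0%Z; 0%Z; 0%Z; 0%Z; 0%Z; 0%Z; 0%Z; 0%Z; 0%Z; 0%Z; 0%Z; 0%Z; 0%Z; 0%Z; 0%Z; (-6650)%Z; 0%Z; 0%Z; 0%Z; 0%Z; 0%Z; 0%Z; 0%Z; 0%Z; 0%Z; 0%Z; 0%Z; 0%Z; 0%Z; 0%Z; 0%Z; (-369)%Z; 0%Z; 0%Z; 0%Z; 0%Z; 0%Z; 0%Z; 0%Z; 0%Z; 0%Z; 0%Z; 0%Z; 0%Z]);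
  (27670437354023923202310363819101275680%Z, [:: 0%Z; 0%Z; 0%Z; 1402684%Z; 0%Z; 0%Z; 0%Z; 0%Z; 0%Z; 0%Z; 0%Z; (-474413)%Z; 0%Z; 0%Z; 0%Z; 0%Z; 0%Z; 0%Z; 0%Z; 0%Z; 0%Z; 0%Z; 0%Z; 0%Z; 0%Z; 0%Z; 0%Z; 0%Z; 0%Z; 0%Z; 0%Z; 0%Z; 0%Z; 0%Z; 0%Z; 1175755%Z; 0%Z; 0%Z; 0%Z; 0%Z; 0%Z; 0%Z; 0%Z; 0%Z; 0%Z; 0%Z; 0%Z; 0%Z; 0%Z; 0%Z; 0%Z; (-226929)%Z; 0%Z; 0%Z; 0%Z; 0%Z; 0%Z; 0%Z; 0%Z; 0%Z; 0%Z; 0%Z; 0%Z; 0%Z]);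
  (1554577307164990107498674893982769327270755235456%Z, [:: 0%Z; 0%Z; 0%Z; (-2)%Z; 0%Z; 0%Z; 0%Z; 0%Z; 0%Z; 0%Z; 0%Z; (-1)%Z; 0%Z; 0%Z; 0%Z; 0%Z; 0%Z; 0%Z; 0%Z; 0%Z; 0%Z; 0%Z; 0%Z; 0%Z; 0%Z; 0%Z; 0%Z; 0%Z; 0%Z; 0%Z; 0%Z; 0%Z; 0%Z; 0%Z; 0%Z; 0%Z; 0%Z; 0%Z; 0%Z; 0%Z; 0%Z; 0%Z; 0%Z; 0%Z; 0%Z; 0%Z; 0%Z; 0%Z; 0%Z; 0%Z; 0%Z; 2%Z; 0%Z; 0%Z; 0%Z; 0%Z; 0%Z; 0%Z; 0%Z; 0%Z; 0%Z; 0%Z; 0%Z; 0%Z])].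
Definition permsL : seq (seq 'I_5) := [::
  [:: o0; o1; o2; o3; o4];
  [:: o0; o1; o2; o4; o3];
  [:: o0; o1; o3; o2; o4];
  [:: o0; o1; o3; o4; o2];
  [:: o0; o1; o4; o2; o3];
  [:: o0; o1; o4; o3; o2];
  [:: o0; o2; o1; o3; o4];
  [:: o0; o2; o1; o4; o3];
  [:: o0; o2; o3; o1; o4];
  [:: o0; o2; o3; o4; o1];
  [:: o0; o2; o4; o1; o3];
  [:: o0; o2; o4; o3; o1];
  [:: o0; o3; o1; o2; o4];
  [:: o0; o3; o1; o4; o2];
  [:: o0; o3; o2; o1; o4];
  [:: o0; o3; o2; o4; o1];
  [:: o0; o3; o4; o1; o2];
  [:: o0; o3; o4; o2; o1];
  [:: o0; o4; o1; o2; o3];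
  [:: o0; o4; o1; o3; o2];
  [:: o0; o4; o2; o1; o3];
  [:: o0; o4; o2; o3; o1];
  [:: o0; o4; o3; o1; o2];
  [:: o0; o4; o3; o2; o1];
  [:: o1; o0; o2; o3; o4];
  [:: o1; o0; o2; o4; o3];
  [:: o1; o0; o3; o2; o4];
  [:: o1; o0; o3; o4; o2];
  [:: o1; o0; o4; o2; o3];
  [:: o1; o0; o4; o3; o2];
  [:: o1; o2; o0; o3; o4];
  [:: o1; o2; o0; o4; o3];
  [:: o1; o2; o3; o0; o4];
  [:: o1; o2; o3; o4; o0];
  [:: o1; o2; o4; o0; o3];
  [:: o1; o2; o4; o3; o0];
  [:: o1; o3; o0; o2; o4];
  [:: o1; o3; o0; o4; o2];
  [:: o1; o3; o2; o0; o4];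
  [:: o1; o3; o2; o4; o0];
  [:: o1; o3; o4; o0; o2];
  [:: o1; o3; o4; o2; o0];
  [:: o1; o4; o0; o2; o3];
  [:: o1; o4; o0; o3; o2];
  [:: o1; o4; o2; o0; o3];
  [:: o1; o4; o2; o3; o0];
  [:: o1; o4; o3; o0; o2];
  [:: o1; o4; o3; o2; o0];
  [:: o2; o0; o1; o3; o4];
  [:: o2; o0; o1; o4; o3];
  [:: o2; o0; o3; o1; o4];
  [:: o2; o0; o3; o4; o1];
  [:: o2; o0; o4; o1; o3];
  [:: o2; o0; o4; o3; o1];
  [:: o2; o1; o0; o3; o4];
  [:: o2; o1; o0; o4; o3];
  [:: o2; o1; o3; o0; o4];
  [:: o2; o1; o3; o4; o0];
  [:: o2; o1; o4; o0; o3];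
  [:: o2; o1; o4; o3; o0];
  [:: o2; o3; o0; o1; o4];
  [:: o2; o3; o0; o4; o1];
  [:: o2; o3; o1; o0; o4];
  [:: o2; o3; o1; o4; o0];
  [:: o2; o3; o4; o0; o1];
  [:: o2; o3; o4; o1; o0];
  [:: o2; o4; o0; o1; o3];
  [:: o2; o4; o0; o3; o1];
  [:: o2; o4; o1; o0; o3];
  [:: o2; o4; o1; o3; o0];
  [:: o2; o4; o3; o0; o1];
  [:: o2; o4; o3; o1; o0];
  [:: o3; o0; o1; o2; o4];
  [:: o3; o0; o1; o4; o2];
  [:: o3; o0; o2; o1; o4];
  [:: o3; o0; o2; o4; o1];
  [:: o3; o0; o4; o1; o2];
  [:: o3; o0; o4; o2; o1];
  [:: o3; o1; o0; o2; o4];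
  [:: o3; o1; o0; o4; o2];
  [:: o3; o1; o2; o0; o4];
  [:: o3; o1; o2; o4; o0];
  [:: o3; o1; o4; o0; o2];
  [:: o3; o1; o4; o2; o0];
  [:: o3; o2; o0; o1; o4];
  [:: o3; o2; o0; o4; o1];
  [:: o3; o2; o1; o0; o4];
  [:: o3; o2; o1; o4; o0];
  [:: o3; o2; o4; o0; o1];
  [:: o3; o2; o4; o1; o0];
  [:: o3; o4; o0; o1; o2];
  [:: o3; o4; o0; o2; o1];
  [:: o3; o4; o1; o0; o2];
  [:: o3; o4; o1; o2; o0];
  [:: o3; o4; o2; o0; o1];
  [:: o3; o4; o2; o1; o0];
  [:: o4; o0; o1; o2; o3];
  [:: o4; o0; o1; o3; o2];
  [:: o4; o0; o2; o1; o3];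
  [:: o4; o0; o2; o3; o1];
  [:: o4; o0; o3; o1; o2];
  [:: o4; o0; o3; o2; o1];
  [:: o4; o1; o0; o2; o3];
  [:: o4; o1; o0; o3; o2];
  [:: o4; o1; o2; o0; o3];
  [:: o4; o1; o2; o3; o0];
  [:: o4; o1; o3; o0; o2];
  [:: o4; o1; o3; o2; o0];
  [:: o4; o2; o0; o1; o3];
  [:: o4; o2; o0; o3; o1];
  [:: o4; o2; o1; o0; o3];
  [:: o4; o2; o1; o3; o0];
  [:: o4; o2; o3; o0; o1];
  [:: o4; o2; o3; o1; o0];
  [:: o4; o3; o0; o1; o2];
  [:: o4; o3; o0; o2; o1];
  [:: o4; o3; o1; o0; o2];
  [:: o4; o3; o1; o2; o0];
  [:: o4; o3; o2; o0; o1];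
  [:: o4; o3; o2; o1; o0]].
Definition Qtab : seq (seq Z) := [::
  [:: 1072517486538561466849258910427317391450559349760%Z; 0%Z; 0%Z; 0%Z; 0%Z; 0%Z; 0%Z; 0%Z; (-2584469221033894645810366957765827325231556210880)%Z; 0%Z; 0%Z; 0%Z; 0%Z; 0%Z; 0%Z; 0%Z; (-2584469221033894645810366957765827325231556210880)%Z; 0%Z; 0%Z; 0%Z; 0%Z; 0%Z; 0%Z; 0%Z; 1832217372836709172534150638646667210394705555840%Z; 0%Z; 0%Z; 0%Z; 0%Z; 0%Z; 0%Z; 0%Z; (-2368476116105989905958780093860325906119985230720)%Z; 0%Z; 0%Z; 0%Z; 0%Z; 0%Z; 0%Z; 0%Z; 2048210477764613912385737502552168629506276536000%Z; 0%Z; 0%Z; 0%Z; 0%Z; 0%Z; 0%Z; 0%Z; 2048210477764613912385737502552168629506276536000%Z; 0%Z; 0%Z; 0%Z; 0%Z; 0%Z; 0%Z; 0%Z; (-1608776229807842200273888365640976087175839024640)%Z];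
  [:: 0%Z; 24727486495194611596802358212629817636221229452800%Z; 0%Z; 0%Z; 0%Z; 0%Z; 0%Z; 0%Z; 0%Z; (-17696538527886264203012772022050736958934229271040)%Z; 0%Z; 0%Z; 0%Z; 0%Z; 0%Z; 0%Z; 0%Z; (-17435857194352586068709132703544097315178884984640)%Z; 0%Z; 0%Z; 0%Z; 0%Z; 0%Z; 0%Z; 0%Z; 0%Z; 0%Z; 0%Z; 0%Z; 0%Z; 0%Z; 0%Z; 0%Z; (-21226908587742362364724915935540656705792320464000)%Z; 0%Z; 0%Z; 0%Z; 0%Z; 0%Z; 0%Z; 0%Z; 5109354137260091432351330642730137017604748013440%Z; 0%Z; 0%Z; 0%Z; 0%Z; 0%Z; 0%Z; 0%Z; 5295555089784147242568215870234879620287136789440%Z];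
  [:: ];
  [:: 0%Z; 0%Z; 0%Z; 67568601651929372411503311356920995661385239034880%Z; 0%Z; 0%Z; 0%Z; 0%Z; 0%Z; 0%Z; 0%Z; (-17651850299280490808560719567449598734290455964800)%Z; 0%Z; 0%Z; 0%Z; 0%Z; 0%Z; 0%Z; 0%Z; 25740419676925475204382213850255617394813424394240%Z; 0%Z; 0%Z; 0%Z; 0%Z; 0%Z; 0%Z; 0%Z; 0%Z; 0%Z; 0%Z; 0%Z; 0%Z; 0%Z; 0%Z; 0%Z; 25695731448319701809930161395654479170169651088000%Z; 0%Z; 0%Z; 0%Z; 0%Z; 0%Z; 0%Z; 0%Z; 0%Z; 0%Z; 0%Z; 0%Z; 0%Z; 0%Z; 0%Z; 0%Z; (-16132450526684195397190936111010899096402163552640)%Z];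
  [:: ];
  [:: ];
  [:: ];
  [:: ];
  [:: (-2584469221033894645810366957765827325231556210880)%Z; 0%Z; 0%Z; 0%Z; 0%Z; 0%Z; 0%Z; 0%Z; 12650492714484351746135182356672212426241493441440%Z; 0%Z; 0%Z; 0%Z; 0%Z; 0%Z; 0%Z; 0%Z; 4550751279687924001700674960215909209557581685440%Z; 0%Z; 0%Z; 0%Z; 0%Z; 0%Z; 0%Z; 0%Z; (-3243620592969052213978140663132616138727212477920)%Z; 0%Z; 0%Z; 0%Z; 0%Z; 0%Z; 0%Z; 0%Z; 4535855203485999536883324142015529801342990583360%Z; 0%Z; 0%Z; 0%Z; 0%Z; 0%Z; 0%Z; 0%Z; (-3258516669170976678795491481332995546941803580000)%Z; 0%Z; 0%Z; 0%Z; 0%Z; 0%Z; 0%Z; 0%Z; (-11358258103967404423229998877789298763625715336000)%Z; 0%Z; 0%Z; 0%Z; 0%Z; 0%Z; 0%Z; 0%Z; 3876703831550841968715550436648740987847334316320%Z];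
  [:: 0%Z; (-17696538527886264203012772022050736958934229271040)%Z; 0%Z; 0%Z; 0%Z; 0%Z; 0%Z; 0%Z; 0%Z; 24094403256612821842064948439113692787101107614400%Z; 0%Z; 0%Z; 0%Z; 0%Z; 0%Z; 0%Z; 0%Z; 8498211473197907178298641783316452386424223736640%Z; 0%Z; 0%Z; 0%Z; 0%Z; 0%Z; 0%Z; 0%Z; 0%Z; 0%Z; 0%Z; 0%Z; 0%Z; 0%Z; 0%Z; 0%Z; 7261837148438176598458523872684961504613162264000%Z; 0%Z; 0%Z; 0%Z; 0%Z; 0%Z; 0%Z; 0%Z; (-7913540482272371934217622168951560614001522980000)%Z; 0%Z; 0%Z; 0%Z; 0%Z; 0%Z; 0%Z; 0%Z; (-6982535719652092883133196031427847600589579100000)%Z];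
  [:: ];
  [:: 0%Z; 0%Z; 0%Z; (-17651850299280490808560719567449598734290455964800)%Z; 0%Z; 0%Z; 0%Z; 0%Z; 0%Z; 0%Z; 0%Z; 8580139892308491734794071283418539131604474798080%Z; 0%Z; 0%Z; 0%Z; 0%Z; 0%Z; 0%Z; 0%Z; (-8747720749580141963989267988172807474018624696480)%Z; 0%Z; 0%Z; 0%Z; 0%Z; 0%Z; 0%Z; 0%Z; 0%Z; 0%Z; 0%Z; 0%Z; 0%Z; 0%Z; 0%Z; 0%Z; (-8658344292368595175085163078970531024731078084000)%Z; 0%Z; 0%Z; 0%Z; 0%Z; 0%Z; 0%Z; 0%Z; 0%Z; 0%Z; 0%Z; 0%Z; 0%Z; 0%Z; 0%Z; 0%Z; 245785257331753669486288500306260235540753184320%Z];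
  [:: ];
  [:: ];
  [:: ];
  [:: ];
  [:: (-2584469221033894645810366957765827325231556210880)%Z; 0%Z; 0%Z; 0%Z; 0%Z; 0%Z; 0%Z; 0%Z; 4550751279687924001700674960215909209557581685440%Z; 0%Z; 0%Z; 0%Z; 0%Z; 0%Z; 0%Z; 0%Z; 12650492714484351746135182356672212426241493441440%Z; 0%Z; 0%Z; 0%Z; 0%Z; 0%Z; 0%Z; 0%Z; (-3243620592969052213978140663132616138727212477920)%Z; 0%Z; 0%Z; 0%Z; 0%Z; 0%Z; 0%Z; 0%Z; 4535855203485999536883324142015529801342990583360%Z; 0%Z; 0%Z; 0%Z; 0%Z; 0%Z; 0%Z; 0%Z; (-11358258103967404423229998877789298763625715336000)%Z; 0%Z; 0%Z; 0%Z; 0%Z; 0%Z; 0%Z; 0%Z; (-3258516669170976678795491481332995546941803580000)%Z; 0%Z; 0%Z; 0%Z; 0%Z; 0%Z; 0%Z; 0%Z; 3876703831550841968715550436648740987847334316320%Z];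
  [:: 0%Z; (-17435857194352586068709132703544097315178884984640)%Z; 0%Z; 0%Z; 0%Z; 0%Z; 0%Z; 0%Z; 0%Z; 8498211473197907178298641783316452386424223736640%Z; 0%Z; 0%Z; 0%Z; 0%Z; 0%Z; 0%Z; 0%Z; 24019922875603199517978194348111795746028152104000%Z; 0%Z; 0%Z; 0%Z; 0%Z; 0%Z; 0%Z; 0%Z; 0%Z; 0%Z; 0%Z; 0%Z; 0%Z; 0%Z; 0%Z; 0%Z; 7261837148438176598458523872684961504613162264000%Z; 0%Z; 0%Z; 0%Z; 0%Z; 0%Z; 0%Z; 0%Z; (-6982535719652092883133196031427847600589579100000)%Z; 0%Z; 0%Z; 0%Z; 0%Z; 0%Z; 0%Z; 0%Z; (-8099741434796427744434507396456303216683911756000)%Z];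
  [:: ];
  [:: 0%Z; 0%Z; 0%Z; 25740419676925475204382213850255617394813424394240%Z; 0%Z; 0%Z; 0%Z; 0%Z; 0%Z; 0%Z; 0%Z; (-8747720749580141963989267988172807474018624696480)%Z; 0%Z; 0%Z; 0%Z; 0%Z; 0%Z; 0%Z; 0%Z; 95912110645141147842717580687692914641698458517600%Z; 0%Z; 0%Z; 0%Z; 0%Z; 0%Z; 0%Z; 0%Z; 0%Z; 0%Z; 0%Z; 0%Z; 0%Z; 0%Z; 0%Z; 0%Z; (-74294180057098268276537205774392298470273121624000)%Z; 0%Z; 0%Z; 0%Z; 0%Z; 0%Z; 0%Z; 0%Z; 0%Z; 0%Z; 0%Z; 0%Z; 0%Z; 0%Z; 0%Z; 0%Z; (-4122489088882595638201838936955001223388087500640)%Z];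
  [:: ];
  [:: ];
  [:: ];
  [:: ];
  [:: 1832217372836709172534150638646667210394705555840%Z; 0%Z; 0%Z; 0%Z; 0%Z; 0%Z; 0%Z; 0%Z; (-3243620592969052213978140663132616138727212477920)%Z; 0%Z; 0%Z; 0%Z; 0%Z; 0%Z; 0%Z; 0%Z; (-3243620592969052213978140663132616138727212477920)%Z; 0%Z; 0%Z; 0%Z; 0%Z; 0%Z; 0%Z; 0%Z; 10687934674880803506449212058772225393969115742400%Z; 0%Z; 0%Z; 0%Z; 0%Z; 0%Z; 0%Z; 0%Z; (-11604043361299158092716287378095558999166468520320)%Z; 0%Z; 0%Z; 0%Z; 0%Z; 0%Z; 0%Z; 0%Z; 2327511906550697627711065343809282533529859700000%Z; 0%Z; 0%Z; 0%Z; 0%Z; 0%Z; 0%Z; 0%Z; 2327511906550697627711065343809282533529859700000%Z; 0%Z; 0%Z; 0%Z; 0%Z; 0%Z; 0%Z; 0%Z; (-2748326059255063758801225957970000815592058333760)%Z];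
  [:: ];
  [:: ];
  [:: ];
  [:: ];
  [:: ];
  [:: ];
  [:: ];
  [:: (-2368476116105989905958780093860325906119985230720)%Z; 0%Z; 0%Z; 0%Z; 0%Z; 0%Z; 0%Z; 0%Z; 4535855203485999536883324142015529801342990583360%Z; 0%Z; 0%Z; 0%Z; 0%Z; 0%Z; 0%Z; 0%Z; 4535855203485999536883324142015529801342990583360%Z; 0%Z; 0%Z; 0%Z; 0%Z; 0%Z; 0%Z; 0%Z; (-11604043361299158092716287378095558999166468520320)%Z; 0%Z; 0%Z; 0%Z; 0%Z; 0%Z; 0%Z; 0%Z; 12788281419352153045695677425025721952226461135680%Z; 0%Z; 0%Z; 0%Z; 0%Z; 0%Z; 0%Z; 0%Z; (-3351617145433004583903934095085366848282997968000)%Z; 0%Z; 0%Z; 0%Z; 0%Z; 0%Z; 0%Z; 0%Z; (-3351617145433004583903934095085366848282997968000)%Z; 0%Z; 0%Z; 0%Z; 0%Z; 0%Z; 0%Z; 0%Z; 3552714174158984858938170140790488859179977846080%Z];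
  [:: 0%Z; (-21226908587742362364724915935540656705792320464000)%Z; 0%Z; 0%Z; 0%Z; 0%Z; 0%Z; 0%Z; 0%Z; 7261837148438176598458523872684961504613162264000%Z; 0%Z; 0%Z; 0%Z; 0%Z; 0%Z; 0%Z; 0%Z; 7261837148438176598458523872684961504613162264000%Z; 0%Z; 0%Z; 0%Z; 0%Z; 0%Z; 0%Z; 0%Z; 0%Z; 0%Z; 0%Z; 0%Z; 0%Z; 0%Z; 0%Z; 0%Z; 39102200030051720145545897775995946563301642960000%Z; 0%Z; 0%Z; 0%Z; 0%Z; 0%Z; 0%Z; 0%Z; 3351617145433004583903934095085366848282997968000%Z; 0%Z; 0%Z; 0%Z; 0%Z; 0%Z; 0%Z; 0%Z; 3351617145433004583903934095085366848282997968000%Z];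
  [:: ];
  [:: 0%Z; 0%Z; 0%Z; 25695731448319701809930161395654479170169651088000%Z; 0%Z; 0%Z; 0%Z; 0%Z; 0%Z; 0%Z; 0%Z; (-8658344292368595175085163078970531024731078084000)%Z; 0%Z; 0%Z; 0%Z; 0%Z; 0%Z; 0%Z; 0%Z; (-74294180057098268276537205774392298470273121624000)%Z; 0%Z; 0%Z; 0%Z; 0%Z; 0%Z; 0%Z; 0%Z; 0%Z; 0%Z; 0%Z; 0%Z; 0%Z; 0%Z; 0%Z; 0%Z; 95800390073626714356587449551190069080089025252000%Z; 0%Z; 0%Z; 0%Z; 0%Z; 0%Z; 0%Z; 0%Z; 0%Z; 0%Z; 0%Z; 0%Z; 0%Z; 0%Z; 0%Z; 0%Z; (-4189521431791255729879917618856708560353747460000)%Z];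
  [:: ];
  [:: ];
  [:: ];
  [:: ];
  [:: 2048210477764613912385737502552168629506276536000%Z; 0%Z; 0%Z; 0%Z; 0%Z; 0%Z; 0%Z; 0%Z; (-3258516669170976678795491481332995546941803580000)%Z; 0%Z; 0%Z; 0%Z; 0%Z; 0%Z; 0%Z; 0%Z; (-11358258103967404423229998877789298763625715336000)%Z; 0%Z; 0%Z; 0%Z; 0%Z; 0%Z; 0%Z; 0%Z; 2327511906550697627711065343809282533529859700000%Z; 0%Z; 0%Z; 0%Z; 0%Z; 0%Z; 0%Z; 0%Z; (-3351617145433004583903934095085366848282997968000)%Z; 0%Z; 0%Z; 0%Z; 0%Z; 0%Z; 0%Z; 0%Z; 10334152865085097467037130126513214448872577068000%Z; 0%Z; 0%Z; 0%Z; 0%Z; 0%Z; 0%Z; 0%Z; 2234411430288669722602622730056911232188665312000%Z; 0%Z; 0%Z; 0%Z; 0%Z; 0%Z; 0%Z; 0%Z; (-3072315716646920868578606253828252944259414804000)%Z];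
  [:: 0%Z; 5109354137260091432351330642730137017604748013440%Z; 0%Z; 0%Z; 0%Z; 0%Z; 0%Z; 0%Z; 0%Z; (-7913540482272371934217622168951560614001522980000)%Z; 0%Z; 0%Z; 0%Z; 0%Z; 0%Z; 0%Z; 0%Z; (-6982535719652092883133196031427847600589579100000)%Z; 0%Z; 0%Z; 0%Z; 0%Z; 0%Z; 0%Z; 0%Z; 0%Z; 0%Z; 0%Z; 0%Z; 0%Z; 0%Z; 0%Z; 0%Z; 3351617145433004583903934095085366848282997968000%Z; 0%Z; 0%Z; 0%Z; 0%Z; 0%Z; 0%Z; 0%Z; 96638294359984965502563433074961410792159774744000%Z; 0%Z; 0%Z; 0%Z; 0%Z; 0%Z; 0%Z; 0%Z; (-86851572295320592117563945517312139595173420677440)%Z];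
  [:: ];
  [:: ];
  [:: ];
  [:: ];
  [:: ];
  [:: ];
  [:: 2048210477764613912385737502552168629506276536000%Z; 0%Z; 0%Z; 0%Z; 0%Z; 0%Z; 0%Z; 0%Z; (-11358258103967404423229998877789298763625715336000)%Z; 0%Z; 0%Z; 0%Z; 0%Z; 0%Z; 0%Z; 0%Z; (-3258516669170976678795491481332995546941803580000)%Z; 0%Z; 0%Z; 0%Z; 0%Z; 0%Z; 0%Z; 0%Z; 2327511906550697627711065343809282533529859700000%Z; 0%Z; 0%Z; 0%Z; 0%Z; 0%Z; 0%Z; 0%Z; (-3351617145433004583903934095085366848282997968000)%Z; 0%Z; 0%Z; 0%Z; 0%Z; 0%Z; 0%Z; 0%Z; 2234411430288669722602622730056911232188665312000%Z; 0%Z; 0%Z; 0%Z; 0%Z; 0%Z; 0%Z; 0%Z; 10334152865085097467037130126513214448872577068000%Z; 0%Z; 0%Z; 0%Z; 0%Z; 0%Z; 0%Z; 0%Z; (-3072315716646920868578606253828252944259414804000)%Z];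
  [:: 0%Z; 5295555089784147242568215870234879620287136789440%Z; 0%Z; 0%Z; 0%Z; 0%Z; 0%Z; 0%Z; 0%Z; (-6982535719652092883133196031427847600589579100000)%Z; 0%Z; 0%Z; 0%Z; 0%Z; 0%Z; 0%Z; 0%Z; (-8099741434796427744434507396456303216683911756000)%Z; 0%Z; 0%Z; 0%Z; 0%Z; 0%Z; 0%Z; 0%Z; 0%Z; 0%Z; 0%Z; 0%Z; 0%Z; 0%Z; 0%Z; 0%Z; 3351617145433004583903934095085366848282997968000%Z; 0%Z; 0%Z; 0%Z; 0%Z; 0%Z; 0%Z; 0%Z; (-86851572295320592117563945517312139595173420677440)%Z; 0%Z; 0%Z; 0%Z; 0%Z; 0%Z; 0%Z; 0%Z; 96638294359984965502563433074961410792159774744000%Z];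
  [:: ];
  [:: 0%Z; 0%Z; 0%Z; (-16132450526684195397190936111010899096402163552640)%Z; 0%Z; 0%Z; 0%Z; 0%Z; 0%Z; 0%Z; 0%Z; 245785257331753669486288500306260235540753184320%Z; 0%Z; 0%Z; 0%Z; 0%Z; 0%Z; 0%Z; 0%Z; (-4122489088882595638201838936955001223388087500640)%Z; 0%Z; 0%Z; 0%Z; 0%Z; 0%Z; 0%Z; 0%Z; 0%Z; 0%Z; 0%Z; 0%Z; 0%Z; 0%Z; 0%Z; 0%Z; (-4189521431791255729879917618856708560353747460000)%Z; 0%Z; 0%Z; 0%Z; 0%Z; 0%Z; 0%Z; 0%Z; 0%Z; 0%Z; 0%Z; 0%Z; 0%Z; 0%Z; 0%Z; 0%Z; 7820440006010344029109179555199189312660328592000%Z];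
  [:: ];
  [:: ];
  [:: ];
  [:: ];
  [:: (-1608776229807842200273888365640976087175839024640)%Z; 0%Z; 0%Z; 0%Z; 0%Z; 0%Z; 0%Z; 0%Z; 3876703831550841968715550436648740987847334316320%Z; 0%Z; 0%Z; 0%Z; 0%Z; 0%Z; 0%Z; 0%Z; 3876703831550841968715550436648740987847334316320%Z; 0%Z; 0%Z; 0%Z; 0%Z; 0%Z; 0%Z; 0%Z; (-2748326059255063758801225957970000815592058333760)%Z; 0%Z; 0%Z; 0%Z; 0%Z; 0%Z; 0%Z; 0%Z; 3552714174158984858938170140790488859179977846080%Z; 0%Z; 0%Z; 0%Z; 0%Z; 0%Z; 0%Z; 0%Z; (-3072315716646920868578606253828252944259414804000)%Z; 0%Z; 0%Z; 0%Z; 0%Z; 0%Z; 0%Z; 0%Z; (-3072315716646920868578606253828252944259414804000)%Z; 0%Z; 0%Z; 0%Z; 0%Z; 0%Z; 0%Z; 0%Z; 2413164344711763300410832548461464130763758536960%Z];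
  [:: ];
  [:: ];
  [:: ];
  [:: ];
  [:: ];
  [:: ];
  [:: ]].
Definition pattern := 'I_5 -> 'I_5 -> bool.
Definition code (p : pattern) (v : 'I_5) : nat :=
  p o0 o1 + 2 * p o0 o2 + 4 * p o1 o2 + 8 * p v o0 + 16 * p v o1 + 32 * p v o2.
Definition lk (v : seq Z) (c : nat) : Z := nth 0%Z v c.
Definition os : seq 'I_5 := [:: o0; o1; o2; o3; o4].
Definition cycp (p : pattern) : bool := all (fun i => all (fun j => p i j == c5adj i j) os) os.
Definition sosc (c3 c4 : nat) : Z :=
  foldr (fun q acc => (q.1 * (lk q.2 c3 * lk q.2 c4) + acc)%Z) 0%Z sqs.
Definition sosf (p : pattern) : Z := sosc (code p o3) (code p o4).
Definition Qf (c3 c4 : nat) : Z := nth 0%Z (nth [::] Qtab c3) c4.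
Definition Phi (p : pattern) : Z := (cA - cB * (if cycp p then 1 else 0) - Qf (code p o3) (code p o4))%Z.
Definition pc (p : pattern) (s : seq 'I_5) : pattern := fun i j => p (nth o0 s i) (nth o0 s j).
Definition symsum (p : pattern) : Z := foldr (fun s acc => (Phi (pc p s) + acc)%Z) 0%Z permsL.
Definition bitsfun (b01 b02 b03 b04 b12 b13 b14 b23 b24 b34 : bool) (i j : nat) : bool :=
  match i, j with
  | 0, 1 | 1, 0 => b01 | 0, 2 | 2, 0 => b02 | 0, 3 | 3, 0 => b03 | 0, 4 | 4, 0 => b04
  | 1, 2 | 2, 1 => b12 | 1, 3 | 3, 1 => b13 | 1, 4 | 4, 1 => b14
  | 2, 3 | 3, 2 => b23 | 2, 4 | 4, 2 => b24 | 3, 4 | 4, 3 => b34 | _, _ => false end.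
Definition mkp b01 b02 b03 b04 b12 b13 b14 b23 b24 b34 : pattern :=
  fun i j => bitsfun b01 b02 b03 b04 b12 b13 b14 b23 b24 b34 (val i) (val j).
Definition notri (x y z : bool) := ~~ [&& x, y & z].
Definition tfb (b01 b02 b03 b04 b12 b13 b14 b23 b24 b34 : bool) : bool :=
  [&& notri b01 b12 b02, notri b01 b13 b03, notri b01 b14 b04, notri b02 b23 b03,
      notri b02 b24 b04, notri b03 b34 b04, notri b12 b23 b13, notri b12 b24 b14,
      notri b13 b34 b14 & notri b23 b34 b24].
Definition allb (f : bool -> bool) := f true && f false.
Definition checkall : bool :=
  allb (fun b01 => allb (fun b02 => allb (fun b03 => allb (fun b04 => allb (fun b12 =>
  allb (fun b13 => allb (fun b14 => allb (fun b23 => allb (fun b24 => allb (fun b34 =>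
   ~~ tfb b01 b02 b03 b04 b12 b13 b14 b23 b24 b34 ||
   Z.leb 0 (symsum (mkp b01 b02 b03 b04 b12 b13 b14 b23 b24 b34)))))))))))).
Lemma checkallT : checkall = true.
Proof. vm_compute. reflexivity. Qed.

Definition Qcheck : bool :=
  all (fun c3 => all (fun c4 => Z.eqb (sosc c3 c4) (Qf c3 c4)) (iota 0 64)) (iota 0 64).
Lemma QcheckT : Qcheck = true.
Proof. vm_compute. reflexivity. Qed.

End M1.
Import M1.

Module M2.

Lemma ord5_cases (i : 'I_5) : i = o0 \/ i = o1 \/ i = o2 \/ i = o3 \/ i = o4.
Proof.
case: i => [[|[|[|[|[|m]]]]] Hi].
- by left; apply: val_inj.
- by right; left; apply: val_inj.
- by right; right; left; apply: val_inj.
- by right; right; right; left; apply: val_inj.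
- by right; right; right; right; apply: val_inj.
- by [].
Qed.

Lemma allbE (f : bool -> bool) b : allb f = true -> f b = true.
Proof. by case: b; rewrite /allb => /andP[]. Qed.

Lemma symsum_ge0 (p : pattern) :
  (forall i, p i i = false) -> (forall i j, p i j = p j i) ->
  (forall i j k, ~~ [&& p i j, p j k & p i k]) -> (0 <= symsum p)%Z.
Proof.
move=> Hirr Hsym Htri.
have E : p = mkp (p o0 o1) (p o0 o2) (p o0 o3) (p o0 o4) (p o1 o2) (p o1 o3)
                 (p o1 o4) (p o2 o3) (p o2 o4) (p o3 o4).
  apply: functional_extensionality => i; apply: functional_extensionality => j.
  by case: (ord5_cases i) => [->|[->|[->|[->|->]]]]; case: (ord5_cases j) => [->|[->|[->|[->|->]]]];
     rewrite /mkp /= ?Hirr // Hsym.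
have := checkallT; rewrite /checkall.
move/(@allbE _ (p o0 o1)); move/(@allbE _ (p o0 o2)); move/(@allbE _ (p o0 o3));
move/(@allbE _ (p o0 o4)); move/(@allbE _ (p o1 o2)); move/(@allbE _ (p o1 o3));
move/(@allbE _ (p o1 o4)); move/(@allbE _ (p o2 o3)); move/(@allbE _ (p o2 o4));
move/(@allbE _ (p o3 o4)).
rewrite -E /tfb /notri !Htri /= => /Z.leb_le; lia.
Qed.

End M2.
Import M2.

Module M3.

Lemma permsOK : all (fun s => uniq s && (size s == 5)) permsL = true.
Proof. vm_compute. reflexivity. Qed.

Definition sgf (s : seq 'I_5) (i : 'I_5) := nth o0 s i.
Lemma nth_inj (s : seq 'I_5) : uniq s -> size s = 5 -> injective (sgf s).
Proof.
move=> Hu Hs i j /eqP; rewrite /sgf nth_uniq ?Hs ?ltn_ord // => /eqP.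
exact: val_inj.
Qed.

Arguments nth_inj {s}.

Lemma big_foldrZ (T : Type) (l : seq T) (F : T -> Z) :
  (\sum_(s <- l) F s)%R = foldr (fun s acc => (F s + acc)%Z) 0%Z l.
Proof. by elim: l => [|a l IH]; rewrite ?big_nil // big_cons IH. Qed.

Section Main.
Variables (n : nat) (g : graph n).
Hypothesis Hsim : simple_graph g.
Hypothesis Htf : triangle_free g.

Definition patf (f : {ffun 'I_5 -> 'I_n}) : pattern := fun i j => g (f i) (f j).

Lemma g_irr x : g x x = false.
Proof. by move: Hsim => /andP[/forallP H _]; apply/negbTE/H. Qed.
Lemma g_sym x y : g x y = g y x.
Proof. by move: Hsim => /andP[_ /forallP H]; move: (H x) => /forallP /(_ y) /eqP. Qed.
Lemma g_tri x y z : ~~ [&& g x y, g y z & g x z].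
Proof. by move: Htf => /forallP /(_ x) /forallP /(_ y) /forallP /(_ z). Qed.

Local Open Scope ring_scope.

Lemma sym_step (s : seq 'I_5) : s \in permsL ->
  \sum_(f : {ffun 'I_5 -> 'I_n} | injectiveb f) Phi (pc (patf f) s) = \sum_(f : {ffun 'I_5 -> 'I_n} | injectiveb f) Phi (patf f).
Proof.
move=> Hs; move/allP: permsOK => /(_ s Hs) /andP[Hu /eqP Hsz].
have [sgi Hl Hr] := injF_bij (nth_inj Hu Hsz).
pose h (f : {ffun 'I_5 -> 'I_n}) := [ffun i => f (sgf s i)].
have hinj : injective h.
  move=> f1 f2 /ffunP E; apply/ffunP => i.
  by have := E (sgi i); rewrite !ffunE Hr.
rewrite [RHS](reindex_inj hinj); apply: eq_big => f.
  apply/injectiveP/injectiveP => Hf x y.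
    by rewrite !ffunE => /Hf /(nth_inj Hu Hsz).
  move=> E; have : sgi x = sgi y by apply: Hf; rewrite !ffunE !Hr.
  by move/(congr1 (sgf s)); rewrite !Hr.
move=> _; congr Phi.
by apply: functional_extensionality => i; apply: functional_extensionality => j;
   rewrite /pc /patf !ffunE.
Qed.

Lemma sum_const_in (T : eqType) (l : seq T) (X : Z) (F : T -> Z) :
  (forall s, s \in l -> F s = X) -> \sum_(s <- l) F s = X *+ size l.
Proof.
elim: l => [|a l IH] H; first by rewrite big_nil.
rewrite big_cons IH ?H ?mem_head //= ?mulrS // => s Hs.
by apply: H; rewrite in_cons Hs orbT.
Qed.

Lemma main_ge0 : 0 <= \sum_(f : {ffun 'I_5 -> 'I_n} | injectiveb f) Phi (patf f).
Proof.
rewrite -(pmulrn_lge0 _ (n:=120)) //.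
have -> : (120 : nat) = size permsL by [].
rewrite -(@sum_const_in _ permsL _ (fun s => \sum_(f : {ffun 'I_5 -> 'I_n} | injectiveb f) Phi (pc (patf f) s))); last first.
  by move=> s Hs; rewrite sym_step.
rewrite exchange_big /=; apply: sumr_ge0 => f _; rewrite big_foldrZ.
have H : (0 <= symsum (patf f))%Z.
  apply: symsum_ge0 => [i|i j|i j k]; rewrite /pc /patf.
  - exact: g_irr.
  - exact: g_sym.
  - exact: g_tri.
by move/Z.leb_le: H.
Qed.
End Main.

End M3.
Import M3.

Module M4.

Lemma enum_I5 : enum 'I_5 = os.
Proof. by apply: (inj_map val_inj); rewrite val_enum_ord. Qed.

Local Open Scope ring_scope.

Section Core.
Variable n : nat.
Definition mk5 (x0 x1 x2 x3 x4 : 'I_n) : {ffun 'I_5 -> 'I_n} :=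
  [ffun i : 'I_5 => nth x0 [:: x0; x1; x2; x3; x4] i].

Lemma inj_mk5 x0 x1 x2 x3 x4 :
  injectiveb (mk5 x0 x1 x2 x3 x4) = uniq [:: x0; x1; x2; x3; x4].
Proof. by rewrite /injectiveb /dinjectiveb enum_I5 /= !ffunE. Qed.

Lemma sum_ffun5 (G : {ffun 'I_5 -> 'I_n} -> Z) :
  \sum_(f : {ffun 'I_5 -> 'I_n} | injectiveb f) G f =
  \sum_x0 \sum_x1 \sum_x2 \sum_x3 \sum_(x4 | uniq [:: x0; x1; x2; x3; x4])
     G (mk5 x0 x1 x2 x3 x4).
Proof.
have E : forall x0 x1 x2 x3,
  \sum_(x4 | uniq [:: x0; x1; x2; x3; x4]) G (mk5 x0 x1 x2 x3 x4) =
  \sum_x4 (if injectiveb (mk5 x0 x1 x2 x3 x4) then G (mk5 x0 x1 x2 x3 x4) else 0).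
  by move=> x0 x1 x2 x3; rewrite big_mkcond; apply: eq_bigr => x4 _; rewrite inj_mk5.
rewrite [RHS](_ : _ = \sum_x0 \sum_x1 \sum_x2 \sum_x3 \sum_x4
    (if injectiveb (mk5 x0 x1 x2 x3 x4) then G (mk5 x0 x1 x2 x3 x4) else 0)); last first.
  by apply: eq_bigr => x0 _; apply: eq_bigr => x1 _; apply: eq_bigr => x2 _;
     apply: eq_bigr => x3 _; exact: E.
rewrite !pair_bigA big_mkcond /=.
pose h (q : 'I_n * 'I_n * 'I_n * 'I_n * 'I_n) := mk5 q.1.1.1.1 q.1.1.1.2 q.1.1.2 q.1.2 q.2.
pose k (f : {ffun 'I_5 -> 'I_n}) := (f o0, f o1, f o2, f o3, f o4).
have hb : bijective h.
  exists k.
    by case=> [[[[x0 x1] x2] x3] x4]; rewrite /h /k /= !ffunE.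
  move=> f; apply/ffunP => i; rewrite /h /k /= ffunE.
  by case: (ord5_cases i) => [->|[->|[->|[->|->]]]].
rewrite (reindex h); last by apply: onW_bij.
by apply: eq_bigr => q _.
Qed.

Lemma mk5E x0 x1 x2 x3 x4 :
  [/\ mk5 x0 x1 x2 x3 x4 o0 = x0, mk5 x0 x1 x2 x3 x4 o1 = x1,
      mk5 x0 x1 x2 x3 x4 o2 = x2 & (mk5 x0 x1 x2 x3 x4 o3 = x3 /\ mk5 x0 x1 x2 x3 x4 o4 = x4)].
Proof. by rewrite !ffunE. Qed.

Lemma inner (P : pred 'I_n) (a : 'I_n -> Z) :
  - \sum_x a x ^+ 2 <= \sum_(x3 | P x3) \sum_(x4 | P x4 && (x4 != x3)) a x3 * a x4.
Proof.
have E : forall x3, P x3 -> \sum_(x4 | P x4 && (x4 != x3)) a x4 = \sum_(x4 | P x4) a x4 - a x3.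
  by move=> x3 Hx; rewrite (bigD1 x3 Hx) /= [a x3 + _]addrC addrK.
rewrite [X in _ <= X](eq_bigr (fun x3 => a x3 * (\sum_(x4 | P x4) a x4) - a x3 ^+ 2)); last first.
  by move=> x3 Hx /=; rewrite -mulr_sumr E // mulrBr expr2.
rewrite sumrB -mulr_suml.
have H1 : 0 <= (\sum_(x4 | P x4) a x4) * (\sum_(x4 | P x4) a x4) by rewrite -expr2 sqr_ge0.
have H2 : \sum_(x3 | P x3) a x3 ^+ 2 <= \sum_x a x ^+ 2.
  rewrite [X in _ <= X](bigID P) /= lerDl; apply: sumr_ge0 => i _; exact: sqr_ge0.
apply: (le_trans (_ : _ <= - \sum_(x3 | P x3) a x3 ^+ 2)); first by rewrite lerN2.
by rewrite addrC lerDl.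
Qed.

Lemma core (Psi : 'I_n -> 'I_n -> 'I_n -> 'I_n -> Z) :
  - \sum_x0 \sum_x1 \sum_x2 \sum_y Psi x0 x1 x2 y ^+ 2 <=
  \sum_(f : {ffun 'I_5 -> 'I_n} | injectiveb f)
     Psi (f o0) (f o1) (f o2) (f o3) * Psi (f o0) (f o1) (f o2) (f o4).
Proof.
rewrite sum_ffun5 -!sumrN; apply: ler_sum => x0 _; rewrite -sumrN; apply: ler_sum => x1 _.
rewrite -sumrN; apply: ler_sum => x2 _.
set th := [:: x0; x1; x2].
have U : forall x3 x4, uniq [:: x0; x1; x2; x3; x4] =
   (uniq th && (x3 \notin th)) && ((x4 \notin th) && (x4 != x3)).
  move=> x3 x4.
  have -> : [:: x0; x1; x2; x3; x4] = rcons (rcons th x3) x4 by [].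
  rewrite !rcons_uniq mem_rcons in_cons negb_or.
  by case: (uniq th); case: (x3 \in th); case: (x4 \in th); case: (x4 == x3).
rewrite [X in _ <= X](eq_bigr (fun x3 => \sum_(x4 | (uniq th && (x3 \notin th)) && ((x4 \notin th) && (x4 != x3))) Psi x0 x1 x2 x3 * Psi x0 x1 x2 x4)); last first.
  move=> x3 _; apply: eq_big => [x4|x4 _]; first by rewrite U.
  by case: (mk5E x0 x1 x2 x3 x4) => -> -> -> [-> ->].
case: (uniq th) => /=; last first.
  rewrite [X in _ <= X]big1 => [|x3 _]; last by rewrite big_pred0.
  by rewrite oppr_le0; apply: sumr_ge0 => y _; exact: sqr_ge0.
rewrite [X in _ <= X](eq_bigr (fun x3 => if x3 \notin th then
   \sum_(x4 | (x4 \notin th) && (x4 != x3)) Psi x0 x1 x2 x3 * Psi x0 x1 x2 x4 else 0)); last first.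
  by move=> x3 _; case: (x3 \notin th) => //; rewrite big_pred0.
rewrite -big_mkcond /=.
exact: (inner (fun x => x \notin th) (Psi x0 x1 x2)).
Qed.
End Core.

End M4.
Import M4.

Module M5.

Definition maxsq (v : seq Z) : Z := foldr (fun x m => Z.max (x * x) m) 0%Z v.
Definition Ebig : Z := foldr (fun q acc => (q.1 * maxsq q.2 + acc)%Z) 0%Z sqs.

Lemma sqs_pos : all (fun q => Z.leb 0 q.1) sqs = true.
Proof. vm_compute. reflexivity. Qed.
Lemma Ebig_small : Z.leb Ebig (120 * cN) = true.
Proof. vm_compute. reflexivity. Qed.

Lemma code_lt (p : pattern) v : (code p v < 64)%nat.
Proof.
rewrite /code.
have := leq_b1 (p o0 o1); have := leq_b1 (p o0 o2); have := leq_b1 (p o1 o2).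
have := leq_b1 (p v o0); have := leq_b1 (p v o1); have := leq_b1 (p v o2).
lia.
Qed.

Lemma sos_eq (p : pattern) : Qf (code p o3) (code p o4) = sosf p.
Proof.
have := QcheckT; rewrite /Qcheck => /allP /(_ (code p o3)).
rewrite mem_iota add0n code_lt => /(_ isT) /allP /(_ (code p o4)).
rewrite mem_iota add0n code_lt => /(_ isT) /Z.eqb_eq.
by rewrite /sosf.
Qed.

Local Open Scope ring_scope.

Lemma lk_sq v c : lk v c ^+ 2 <= maxsq v.
Proof.
apply/Z.leb_le; rewrite expr2 /=.
elim: v c => [|x v IH] [|c] /=; rewrite /lk /=; try lia.
have := IH c; rewrite /lk; lia.
Qed.

Arguments patf {n}.
Lemma sum_le_const (m : nat) (F : 'I_m -> Z) (Y : Z) : (forall i, F i <= Y) -> \sum_i F i <= Y *+ m.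
Proof. by move=> H; rewrite -[X in _ *+ X]card_ord -sumr_const; apply: ler_sum => i _; exact: H. Qed.

Section Sos.
Variables (n : nat) (g : graph n).

Lemma sos_bound :
  - (Ebig *+ (n * n * n * n)) <= \sum_(f : {ffun 'I_5 -> 'I_n} | injectiveb f) sosf (patf g f).
Proof.
rewrite (eq_bigr (fun f => \sum_(q <- sqs) q.1 * (lk q.2 (code (patf g f) o3) * lk q.2 (code (patf g f) o4)))); last first.
  by move=> f _; rewrite big_foldrZ.
rewrite exchange_big /= /Ebig -big_foldrZ -sumrMnl -sumrN !big_seq.
apply: ler_sum => q Hq.
have q0 : 0 <= q.1 by move/allP: sqs_pos => /(_ q Hq) /Z.leb_le H; apply/Z.leb_le.
rewrite -mulr_sumr -mulrnAr -mulrN; apply: ler_wpM2l => //.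
pose Psi := fun x0 x1 x2 y : 'I_n => lk q.2
  (g x0 x1 + 2 * g x0 x2 + 4 * g x1 x2 + 8 * g y x0 + 16 * g y x1 + 32 * g y x2)%nat.
apply: (le_trans _ (core n Psi)); rewrite lerN2.
rewrite !mulrnA.
apply: sum_le_const => x0; apply: sum_le_const => x1; apply: sum_le_const => x2.
apply: sum_le_const => y; exact: lk_sq.
Qed.
End Sos.

End M5.
Import M5.

Module M6.
Definition autL : seq (seq 'I_5) := [:: [:: o0; o1; o2; o3; o4]; [:: o1; o2; o3; o4; o0]; [:: o2; o3; o4; o0; o1]; [:: o3; o4; o0; o1; o2]; [:: o4; o0; o1; o2; o3]; [:: o0; o4; o3; o2; o1]; [:: o1; o0; o4; o3; o2]; [:: o2; o1; o0; o4; o3]; [:: o3; o2; o1; o0; o4]; [:: o4; o3; o2; o1; o0]].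

Lemma autOK : all (fun s => [&& uniq s, size s == 5 &
   all (fun i => all (fun i' => c5adj (sgf s i) (sgf s i') == c5adj i i') os) os]) autL = true.
Proof. vm_compute. reflexivity. Qed.
Lemma autL_uniq : uniq autL && (size autL == 10) = true.
Proof. vm_compute. reflexivity. Qed.

Lemma mem_os (i : 'I_5) : i \in os.
Proof. by case: (ord5_cases i) => [->|[->|[->|[->|->]]]]. Qed.

Lemma imsetT_inj (T : finType) (s : T -> T) : injective s -> s @: setT = setT.
Proof. move=> Hs; apply/eqP; by rewrite eqEcard subsetT card_imset // leqnn. Qed.

Section Count.
Variables (n : nat) (g : graph n).

Lemma count_ten (S : {set 'I_n}) : S \in C_C5 g ->
  10 <= #|[set f : {ffun 'I_5 -> 'I_n} | (injectiveb f && cycp (patf g f)) && (f @: setT == S)]|.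
Proof.
rewrite inE => /andP[_ /existsP[f0 /and3P[/injectiveP Hinj /eqP Him /forallP Hadj]]].
pose sj (j : 'I_10) := nth os autL j.
have Hj : forall j : 'I_10, [&& uniq (sj j), size (sj j) == 5 &
   all (fun i => all (fun i' => c5adj (sgf (sj j) i) (sgf (sj j) i') == c5adj i i') os) os].
  by move=> j; apply: (allP autOK); rewrite mem_nth //; case/andP: autL_uniq => _ /eqP ->.
pose h (j : 'I_10) := [ffun i => f0 (sgf (sj j) i)].
have hinj : injective h.
  move=> j j' /ffunP E.
  have E' : sj j = sj j'.
    case/and3P: (Hj j) => _ /eqP s1 _; case/and3P: (Hj j') => _ /eqP s2 _.
    apply: (eq_from_nth (x0 := o0)); first by rewrite s1 s2.
    move=> k; rewrite s1 => Hk; have := E (Ordinal Hk); rewrite !ffunE => /Hinj.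
    by [].
  case/andP: autL_uniq => Hu /eqP Hs.
  by apply: val_inj; apply/eqP; rewrite -(nth_uniq os _ _ Hu) ?Hs ?ltn_ord //; apply/eqP.
have -> : 10 = #|h @: setT| by rewrite card_imset // cardsT card_ord.
apply: subset_leq_card.
apply/subsetP => f /imsetP[j _ ->]; rewrite inE.
case/and3P: (Hj j) => Hu /eqP Hs Hc.
have sinj : injective (sgf (sj j)) := nth_inj Hu Hs.
apply/andP; split; first (apply/andP; split).
- apply/injectiveP => x y; rewrite !ffunE => /Hinj; exact: sinj.
- apply/allP => i _; apply/allP => i' _; rewrite /patf !ffunE.
  move: (Hadj (sgf (sj j) i)) => /forallP /(_ (sgf (sj j) i')) /eqP ->.
  by move/allP: Hc => /(_ i (mem_os i)) /allP /(_ i' (mem_os i')).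
- apply/eqP; rewrite -Him.
  rewrite -[in RHS](@imsetT_inj _ _ sinj) -imset_comp; apply: eq_imset => i.
  by rewrite ffunE.
Qed.

Lemma count_C : 10 * #|C_C5 g| <=
  #|[set f : {ffun 'I_5 -> 'I_n} | injectiveb f && cycp (patf g f)]|.
Proof.
rewrite -[X in _ <= X]sum1_card (partition_big (fun f : {ffun 'I_5 -> 'I_n} => f @: setT) predT) //=.
apply: (@leq_trans (\sum_(S in C_C5 g) 10)); first by rewrite sum_nat_const mulnC.
rewrite [X in _ <= X](bigID (fun S => S \in C_C5 g)) /=.
apply: leq_trans (leq_addr _ _); apply: leq_sum => S HS.
apply: (@leq_trans #|[set f : {ffun 'I_5 -> 'I_n} | (injectiveb f && cycp (patf g f)) && (f @: setT == S)]|); first exact: count_ten.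
rewrite -sum1_card; apply: eq_leq.
by apply: eq_bigl => f; rewrite !inE.
Qed.
End Count.

End M6.
Import M6.

Module M7.
Local Open Scope ring_scope.

Arguments main_ge0 {n g}.
Arguments sos_bound {n}.
Section Key.
Variables (n : nat) (g : graph n).
Hypothesis Hsim : simple_graph g.
Hypothesis Htf : triangle_free g.

Lemma key : cB * (#|[set f : {ffun 'I_5 -> 'I_n} | injectiveb f && cycp (patf g f)]|)%:R
   <= cA *+ #|[set f : {ffun 'I_5 -> 'I_n} | injectiveb f]| + Ebig *+ (n * n * n * n).
Proof.
have H0 := main_ge0 Hsim Htf.
have Hs := sos_bound g.
set S := \sum_(f : {ffun 'I_5 -> 'I_n} | injectiveb f) sosf (patf g f) in Hs.
have E : \sum_(f : {ffun 'I_5 -> 'I_n} | injectiveb f) Phi (patf g f) =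
   cA *+ #|[set f : {ffun 'I_5 -> 'I_n} | injectiveb f]|
   - cB * (#|[set f : {ffun 'I_5 -> 'I_n} | injectiveb f && cycp (patf g f)]|)%:R - S.
  rewrite (eq_bigr (fun f => cA - cB * (if cycp (patf g f) then 1 else 0) - sosf (patf g f))); last first.
    by move=> f _; rewrite /Phi sos_eq.
  rewrite !sumrB -mulr_sumr; congr (_ - _ * _ - _).
    by rewrite sumr_const cardsE.
  by rewrite -big_mkcondr sumr_const cardsE.
rewrite E in H0.
have H1 : cB * (#|[set f : {ffun 'I_5 -> 'I_n} | injectiveb f && cycp (patf g f)]|)%:R + S
   <= cA *+ #|[set f : {ffun 'I_5 -> 'I_n} | injectiveb f]|.
  by rewrite -subr_ge0 opprD addrA.
apply: (le_trans (_ : _ <= cA *+ #|[set f : {ffun 'I_5 -> 'I_n} | injectiveb f]| - S)).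
  by rewrite lerBrDr.
by rewrite lerD2l lerNl.
Qed.
End Key.

End M7.
Import M7.

Module M8.

Lemma natrZ (k : nat) : (k%:R : Z)%R = Z.of_nat k.
Proof. by rewrite -[in RHS](natn k) rmorph_nat. Qed.

Lemma cAB : (625 * cA = 24 * cN /\ cB = 12 * cN /\ 0 < cN)%Z.
Proof. vm_compute. split; [reflexivity| split; reflexivity]. Qed.

Arguments key {n g}.
Arguments count_C {n}.
Lemma bound_nat n (g : graph n) : simple_graph g -> triangle_free g ->
  625 * #|C_C5 g| <= 24 * 'C(n, 5) + 625 * (n * n * n * n).
Proof.
move=> Hs Ht.
have K := key Hs Ht.
rewrite -[(cA *+ _)%R]mulr_natr -[(Ebig *+ _)%R]mulr_natr !natrZ in K.
move/Z.leb_le: K => K.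
rewrite card_inj_ffuns !card_ord -(bin_ffact n 5) in K.
have C := count_C g.
have Eb := Ebig_small; move/Z.leb_le: Eb => Eb.
case: cAB => [HA [HB HN]].
set Tn := #|_| in K C.
set Cb := 'C(n, 5) in K *.
set n4 := (n * n * n * n)%nat in K *.
set c := #|C_C5 g| in C *.
have K' : (cB * Z.of_nat Tn <= cA * (Z.of_nat Cb * Z.of_nat 120) + Ebig * Z.of_nat n4)%Z.
  by rewrite -Nat2Z.inj_mul; exact: K.
clear K; clearbody Tn Cb n4 c.
have P1 : (cB * (10 * Z.of_nat c) <= cB * Z.of_nat Tn)%Z.
  by apply: Z.mul_le_mono_nonneg_l; lia.
have P2 : (Ebig * Z.of_nat n4 <= 120 * cN * Z.of_nat n4)%Z.
  by apply: Z.mul_le_mono_nonneg_r; lia.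
have P3 : (625 * (cA * (Z.of_nat Cb * Z.of_nat 120)) = 24 * cN * (Z.of_nat Cb * Z.of_nat 120))%Z.
  by rewrite Z.mul_assoc HA.
rewrite HB in P1 K'.
have : (cN * (625 * Z.of_nat c - 24 * Z.of_nat Cb - 625 * Z.of_nat n4) <= 0)%Z by nia.
move=> H; have : (625 * Z.of_nat c - 24 * Z.of_nat Cb - 625 * Z.of_nat n4 <= 0)%Z by nia.
lia.
Qed.

End M8.
Import M8.

Module M9.

Lemma ffact_bound n : 8 <= n -> n * (n * n * n * n) <= 1920 * 'C(n, 5).
Proof.
move=> Hn; have [m ->] : exists m, n = m + 8 by exists (n - 8); rewrite subnK.
have H := bin_ffact (m + 8) 5.
have E : (m + 8) ^_ 5 = (m + 8) * ((m + 7) * ((m + 6) * ((m + 5) * ((m + 4) * 1)))).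
  by rewrite !addnS !ffactSS addn0 ffactn0.
rewrite E in H.
have F : 5`! = 120 by [].
rewrite F in H.
nia.
Qed.

Lemma ex_bound n : 625 * ex_C5_K3 n <= 24 * 'C(n, 5) + 625 * (n * n * n * n).
Proof.
rewrite /ex_C5_K3.
apply: (big_ind (fun x => 625 * x <= 24 * 'C(n, 5) + 625 * (n * n * n * n))) => //.
- move=> x y Hx Hy; change (625 * maxn x y <= 24 * 'C(n, 5) + 625 * (n * n * n * n)).
  by case: (leqP x y).
- by move=> g /andP[Hs Ht]; exact: bound_nat.
Qed.


End M9.
Import M9.

Delimit Scope nat_scope with N.
Local Open Scope ring_scope.

Theorem theorem1 :
  forall eps : rat, 0 < eps ->
  exists N : nat, forall n : nat, (N <= n)%N ->
    (ex_C5_K3 n)%:R / ('C(n, 5))%:R <= 24%:R / 625%:R + eps.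
Proof.
move=> eps Heps.
exists (maxn 8 (Num.Def.archi_bound (1920%:R / eps))) => n.
rewrite geq_max => /andP[H8 Hb].
have Hnb := @archi_boundP _ (1920%:R / eps) (ltW (divr_gt0 (ltr0n _ 1920) Heps)).
have Hn : 1920%:R / eps < n%:R.
  apply: (lt_le_trans Hnb); rewrite ler_nat; exact: Hb.
have Hne : 1920%:R <= n%:R * eps.
  rewrite -(ler_pdivrMr _ _ Heps); exact: ltW Hn.
have HC : (0 < 'C(n, 5))%N.
  rewrite bin_gt0; exact: (leq_trans (isT : (5 <= 8)%N) H8).
have HCr : 0 < ('C(n, 5))%:R :> rat.
  rewrite ltr0n; exact: HC.
have A1 : 625%:R * (ex_C5_K3 n)%:R <= 24%:R * ('C(n, 5))%:R + 625%:R * (n * n * n * n)%:R :> rat.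
  rewrite -!natrM -natrD ler_nat; exact: ex_bound.
have A2 : n%:R * (n * n * n * n)%:R <= 1920%:R * ('C(n, 5))%:R :> rat.
  rewrite -!natrM ler_nat; apply: ffact_bound; exact: H8.
have A3 : (n * n * n * n)%:R <= eps * ('C(n, 5))%:R :> rat.
  have Hn0 : 0 < n%:R :> rat.
    rewrite ltr0n; exact: (leq_trans (isT : (0 < 8)%N) H8).
  rewrite -(ler_pM2l Hn0); apply: (le_trans A2).
  rewrite mulrA; apply: ler_wpM2r; first exact: ltW HCr.
  exact: Hne.
rewrite (ler_pdivrMr _ _ HCr).
set x := (ex_C5_K3 n)%:R in A1 *; set c := ('C(n, 5))%:R in A1 A3 HCr *.
set y := (n * n * n * n)%:R in A1 A3.
set e := eps * c in A3.
have -> : (24%:R / 625%:R + eps) * c = 24%:R / 625%:R * c + e by rewrite mulrDl.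
lra.
Qed.
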